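(* Let $U:\mathbb R^m_{++}\to\mathbb R$ be concave and let $s^{opt}$ be a maximizer of $U$ over $B_s$. Let $w'\in W$ have weighted center $(x',y',s')$ and let $g'$ be a supergradient of $U$ at $s'$. Put $g'_w:=(Y')^{-1}g'$. Then $$(g'_w)^{\top}\bigl(S^{opt}y'-w'\bigr)\ \ge\ 0,$$ i.e. $S^{opt}y'$ lies in the half-space $\{w:(g'_w)^\top(w-w')\ge 0\}$.
   Context: Let $A\in\mathbb R^{m\times n}$ have full column rank $n\le m$ and $b\in\mathbb R^m$ be such that $\{x\in\mathbb R^n:Ax\le b\}$ is bounded with nonempty interior. For $w\in\mathbb R^m_{++}$ the weighted center of $w$ is the unique $(x,y,s)\in\mathbb R^n\times\mathbb R^m\times\mathbb R^m$ with $Ax+s=b$, $s>0$, $A^\top y=0$, $\mathrm{Diag}(s)y=w$; we call $s$ and $y$ its $s$-vector and $y$-vector. Capital letters denote diagonal matrices of the corresponding vectors ($Y=\mathrm{Diag}(y)$, $S^{opt}=\mathrm{Diag}(s^{opt})$, etc.). $W=\{w\in\mathbb R^m:w>0,\ e^\top w=1\}$ ($e$ the all-ones vector). A vector is a centric $s$-vector (resp. $y$-vector) if it is the $s$-vector (resp. $y$-vector) of the weighted center of some $w\in W$; $B_s$ is the set of centric $s$-vectors. A supergradient of a concave $U$ at $s^0$ is a vector $g$ with $U(s)\le U(s^0)+g^\top(s-s^0)$ for all $s$ in the domain. *)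

(* Defs.v *)
From HB Require Import structures.
From mathcomp Require Import all_boot all_order all_algebra.
Set Implicit Arguments. Unset Strict Implicit. Unset Printing Implicit Defensive.
Import Order.TTheory GRing.Theory Num.Theory.
Local Open Scope ring_scope.

Definition Diag (R : ringType) (m : nat) (v : 'cV[R]_m) : 'M[R]_m := diag_mx v^T.

Definition vle (R : realFieldType) (m : nat) (u v : 'cV[R]_m) : Prop :=
  forall i, u i 0 <= v i 0.
Definition vpos (R : realFieldType) (m : nat) (v : 'cV[R]_m) : Prop :=
  forall i, 0 < v i 0.

Definition standing (R : realFieldType) (m n : nat)
  (A : 'M[R]_(m, n)) (b : 'cV[R]_m) : Prop :=
  [/\ (n <= m)%N, \rank A = n,
      exists M : R, forall x : 'cV[R]_n, vle (A *m x) b -> forall j, `|x j 0| <= M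
    &
      exists x : 'cV[R]_n, forall i, (A *m x) i 0 < b i 0].

Definition weighted_center (R : realFieldType) (m n : nat)
  (A : 'M[R]_(m, n)) (b : 'cV[R]_m) (w : 'cV[R]_m)
  (x : 'cV[R]_n) (y s : 'cV[R]_m) : Prop :=
  [/\ A *m x + s = b, vpos s, A^T *m y = 0 & Diag s *m y = w].

Definition inW (R : realFieldType) (m : nat) (w : 'cV[R]_m) : Prop :=
  vpos w /\ \sum_i w i 0 = 1.

Definition centric_s (R : realFieldType) (m n : nat)
  (A : 'M[R]_(m, n)) (b : 'cV[R]_m) (s : 'cV[R]_m) : Prop :=
  exists w, inW w /\ exists x y, weighted_center A b w x y s.

(* U concave on R^m_{++} (U given as a total function, only its values on
   positive vectors matter) *)
Definition concave_pos (R : realFieldType) (m : nat) (U : 'cV[R]_m -> R) : Prop :=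
  forall s1 s2 : 'cV[R]_m, vpos s1 -> vpos s2 -> forall t : R, 0 <= t -> t <= 1 ->
    t * U s1 + (1 - t) * U s2 <= U (t *: s1 + (1 - t) *: s2).

Definition supergradient (R : realFieldType) (m : nat) (U : 'cV[R]_m -> R)
  (s0 g : 'cV[R]_m) : Prop :=
  forall s, vpos s -> U s <= U s0 + (g^T *m (s - s0)) 0 0.

(* Main.v *)
Require Import Defs.
From HB Require Import structures.
From mathcomp Require Import all_boot all_order all_algebra.
Import Order.TTheory GRing.Theory Num.Theory.
Local Open Scope ring_scope.

Theorem lemma3p2 (R : realFieldType) (m n : nat)
  (A : 'M[R]_(m, n)) (b : 'cV[R]_m)
  (U : 'cV[R]_m -> R) (sopt : 'cV[R]_m)
  (w' : 'cV[R]_m) (x' : 'cV[R]_n) (y' s' : 'cV[R]_m) (g' : 'cV[R]_m) :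
  standing A b ->
  concave_pos U ->
  centric_s A b sopt ->
  (forall s, centric_s A b s -> U s <= U sopt) ->
  inW w' ->
  weighted_center A b w' x' y' s' ->
  supergradient U s' g' ->
  let g'w := invmx (Diag y') *m g' in
  0 <= (g'w^T *m (Diag sopt *m y' - w')) 0 0.
Proof.
move=> _ _ [w0 [_ [x0 [y0 [_ spos _ _]]]]] Hmax [wpos wsum] [Hs' s'pos Hy Hw'] Hg; cbv zeta.
have Hcs' : centric_s A b s'.
  exists w'; split; first by split.
  by exists x', y'; split.
have HU := Hmax _ Hcs'.
have ypos : vpos y'.
  move=> i; have := s'pos i; have := wpos i.
  rewrite -Hw' /Diag mul_diag_mx !mxE.
  by move=> h1 h2; rewrite -(pmulr_rgt0 _ h2).
set D := Diag y'.
have Dunit : D \in unitmx.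
  rewrite unitmxE unitfE /D /Diag det_diag.
  rewrite prodf_seq_neq0; apply/allP => i _ /=; rewrite mxE.
  exact: lt0r_neq0.
have HD : D *m (sopt - s') = Diag sopt *m y' - w'.
  apply/matrixP => i j; rewrite -Hw' /D /Diag !mul_diag_mx !mxE.
  rewrite (ord1 j) mulrBr mulrC; congr (_ - _); exact: mulrC.
have E : (invmx D *m g')^T *m (Diag sopt *m y' - w') = g'^T *m (sopt - s').
  rewrite trmx_mul trmx_inv /D /Diag tr_diag_mx -/(Diag y') -/D.
  by rewrite -mulmxA -HD mulKmx.
rewrite E.
have := Hg _ spos.
move: HU; set a := U s'; set c := U sopt; set d := (g'^T *m (sopt - s')) 0 0.
move=> h1 h2.
by rewrite -(lerD2l a) addr0 (le_trans h1 h2).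
Qed.
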